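(* Let $R=\mathbb{Z}$ or $\mathbb{Z}[i]$, $1\leq k<n$, and let $A_0=(a_1|\dots|a_k)\in R^{n\times k}$ be a $k$-icube of norm $\lambda$ with $a_1$ primitive. Let $b_{k+1},\dots,b_n$ be an $R$-basis of $\Lambda=\{w\in R^n: a_j^*w=0,\ 1\leq j\leq k\}$ and $B=(a_1|\dots|a_k|b_{k+1}|\dots|b_n)$. Let $a=(\alpha_1,\dots,\alpha_n)^T$ with $\alpha_j=\overline{(-1)^{j+1}\det B_{j,1}}$, where $B_{j,1}$ is the matrix obtained from $B$ by deleting row $j$ and column $1$. Then $\overline{\det B}/\lambda\in R$ and $a=(\overline{\det B}/\lambda)\,a_1$.
   Context: A $k$-icube of norm $\lambda>0$ in $R^n$ is $(v_1|\dots|v_k)\in R^{n\times k}$ with $v_i^*v_j=\lambda$ if $i=j$ and $0$ otherwise. A vector is primitive if its entries have no common non-unit divisor in $R$. *)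

(* Defs.v *)
(* R = Z or Z[i] is modelled as a subring of algC. *)
From HB Require Import structures.
From mathcomp Require Import all_boot all_order all_algebra all_field.
Set Implicit Arguments. Unset Strict Implicit. Unset Printing Implicit Defensive.
Import Order.TTheory GRing.Theory Num.Theory.
Local Open Scope ring_scope.

Definition inR (gauss : bool) (x : algC) : bool :=
  if gauss then ('Re x \is a Num.int) && ('Im x \is a Num.int)
  else x \is a Num.int.

Definition vecR (gauss : bool) n (v : 'cV[algC]_n) : Prop :=
  forall i, inR gauss (v i 0).

Definition divR (gauss : bool) (d x : algC) : Prop :=
  exists r, inR gauss r /\ x = d * r.
Definition unitR (gauss : bool) (u : algC) : Prop :=
  inR gauss u /\ exists v, inR gauss v /\ u * v = 1.

Definition primitiveR (gauss : bool) n (v : 'cV[algC]_n) : Prop :=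
  forall d, inR gauss d -> (forall i, divR gauss d (v i 0)) -> unitR gauss d.

Definition dotC n (u v : 'cV[algC]_n) : algC := \sum_(l < n) (u l 0)^* * v l 0.

Definition icube (gauss : bool) n k (a : nat -> 'cV[algC]_n) (lam : algC) : Prop :=
  0 < lam /\ (forall i, (i < k)%N -> vecR gauss (a i)) /\
  forall i j, (i < k)%N -> (j < k)%N -> dotC (a i) (a j) = if i == j then lam else 0.

Definition inLambda (gauss : bool) n k (a : nat -> 'cV[algC]_n) (w : 'cV[algC]_n) : Prop :=
  vecR gauss w /\ forall j, (j < k)%N -> dotC (a j) w = 0.

Definition basisLambda (gauss : bool) n k (a b : nat -> 'cV[algC]_n) : Prop :=
  (forall j, (k <= j < n)%N -> inLambda gauss k a (b j)) /\
  (forall w, inLambda gauss k a w ->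
     exists c : nat -> algC, (forall j, inR gauss (c j)) /\
        w = \sum_(k <= j < n) c j *: b j) /\
  (forall c : nat -> algC, (forall j, inR gauss (c j)) ->
     \sum_(k <= j < n) c j *: b j = 0 -> forall j, (k <= j < n)%N -> c j = 0).

(* B = (a_1 | ... | a_k | b_{k+1} | ... | b_n), 0-based columns *)
Definition Bmat n k (a b : nat -> 'cV[algC]_n) : 'M[algC]_n :=
  \matrix_(i < n, j < n) (if (j < k)%N then a j i 0 else b j i 0).

(* Main.v *)
Require Import Defs.
From HB Require Import structures.
From mathcomp Require Import all_boot all_order all_algebra all_field.
Set Implicit Arguments. Unset Strict Implicit. Unset Printing Implicit Defensive.
Import Order.TTheory GRing.Theory Num.Theory.
Local Open Scope ring_scope.

Lemma inR_int g x : x \is a Num.int -> inR g x.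
Proof.
case: g => //= xi; have xr := Rreal_int xi.
by rewrite (Creal_ReP _ xr) (Creal_ImP _ xr) xi int_num0.
Qed.

Lemma inRB g x y : inR g x -> inR g y -> inR g (x - y).
Proof.
case: g => /=; last exact: rpredB.
by move=> /andP[? ?] /andP[? ?]; rewrite !raddfB /= !rpredB.
Qed.

Lemma inRM g x y : inR g x -> inR g y -> inR g (x * y).
Proof.
case: g => /=; last exact: rpredM.
by move=> /andP[? ?] /andP[? ?]; rewrite ReM ImM ?(rpredB, rpredD, rpredM).
Qed.

Lemma inRJ g x : inR g x -> inR g x^*.
Proof.
case: g => /=; last by move=> xi; rewrite conj_Creal // Rreal_int.
by move=> /andP[? ?]; rewrite Re_conj Im_conj rpredN; apply/andP.
Qed.

Lemma inR_i : inR true 'i.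
Proof. by rewrite /= Re_i Im_i int_num0 int_num1. Qed.

Definition inRp g : {pred algC} := fun x => inR g x.

Lemma inRpE g x : (x \in inRp g) = inR g x.
Proof. by []. Qed.

Fact inRp_subring g : subring_closed (inRp g).
Proof.
split; first by rewrite inRpE inR_int.
  by move=> x y; rewrite !inRpE; exact: inRB.

by move=> x y; rewrite !inRpE; exact: inRM.
Qed.

HB.instance Definition _ g := GRing.isSubringClosed.Build algC (inRp g) (inRp_subring g).


Lemma inR_det g n (A : 'M[algC]_n) : (forall i j, inR g (A i j)) -> inR g (\det A).
Proof.
move=> HA; rewrite -inRpE /determinant; apply: rpred_sum => s _.
apply: rpredM; first by apply: rpredX; rewrite rpredN rpred1.
by apply: rpred_prod => i _; rewrite inRpE.
Qed.

Lemma sq_bound (u h : algC) : - h <= u -> u <= h -> u ^+ 2 <= h ^+ 2.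
Proof.
move=> H1 H2; rewrite -subr_ge0 subr_sqr; apply: mulr_ge0.
  by rewrite subr_ge0.
by rewrite -[u]opprK subr_ge0 lerNl.
Qed.

Lemma round_bnd (x : algC) : x \is Num.real ->
  (x - (Num.floor (x + 2^-1))%:~R) ^+ 2 <= 2^-1 ^+ 2.
Proof.
move=> xr; have xhr : x + 2^-1 \is Num.real by rewrite rpredD // rpredV realn.
have H1 := real_floor_le xhr; have H2 := real_floorD1_gt xhr.
apply: sq_bound.
  by rewrite lerBrDl lerBlDr.
rewrite intrD in H2; apply: ltW.
have e : (1 - 2^-1 : algC) = 2^-1.
  by apply/eqP; rewrite subr_eq {1}(splitr 1) mul1r.
rewrite -[X in _ < X]e ltrBlDr addrAC ltrBrDr [1 + _]addrC //.
Qed.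

Lemma half_sq : (2^-1 : algC) ^+ 2 + 2^-1 ^+ 2 = 2^-1.
Proof.
by rewrite -mulr2n -[_ *+ 2]mulr_natr expr2 -mulrA mulVf ?mulr1 // pnatr_eq0.
Qed.

Lemma euclid g y d : inR g y -> inR g d -> d != 0 ->
  exists2 q, inR g q & `|y - q * d| ^+ 2 <= 2^-1 * `|d| ^+ 2.
Proof.
move=> Hy Hd d0; set w := y / d.
suff [q Hq Hb] : exists2 q, inR g q & `|w - q| ^+ 2 <= 2^-1.
  exists q => //.
  have -> : y - q * d = (w - q) * d by rewrite mulrBl divfK.
  by rewrite normrM exprMn ler_wpM2r // exprn_ge0.
have hr : (2^-1 : algC) \is Num.real by rewrite rpredV realn.
case: g Hy Hd => /= Hy Hd.
- set fr := Num.floor ('Re w + 2^-1); set fi := Num.floor ('Im w + 2^-1).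
  have rr : (fr%:~R : algC) \is Num.real := Rreal_int (intr_int _ _).
  have ri : (fi%:~R : algC) \is Num.real := Rreal_int (intr_int _ _).
  exists (fr%:~R + 'i * fi%:~R).
    by rewrite Re_rect // Im_rect // !intr_int.
  rewrite {1}[w]Crect subC_rect normC2_rect ?rpredB //.
  rewrite -half_sq; apply: lerD; exact: round_bnd.
- have wr : w \is Num.real by rewrite rpredM ?rpredV // Rreal_int.
  exists (Num.floor (w + 2^-1))%:~R; first exact: intr_int.
  rewrite real_normK; last by rewrite rpredB // Rreal_int // intr_int.
  apply: (le_trans (round_bnd wr)).
  rewrite -[X in _ <= X]half_sq. by rewrite lerDl exprn_ge0 // invr_ge0 ler0n.
Qed.

Lemma normR_ge1 g d : inR g d -> d != 0 -> 1 <= `|d| ^+ 2.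
Proof.
case: g => /= [/andP[Hre Him]|Hd] d0; last by rewrite intr_normK // sqr_intr_ge1.
rewrite normC2_Re_Im.
have ge0 : forall x : algC, x \is a Num.int -> 0 <= x ^+ 2.
  by move=> x xi; rewrite -intr_normK // exprn_ge0.
have [re0|re0] := eqVneq ('Re d) 0.
  have im0 : 'Im d != 0.
    by apply: contra d0 => /eqP im0; rewrite [d]Crect re0 im0 mulr0 addr0.
  by rewrite re0 expr0n /= add0r sqr_intr_ge1.
by apply: le_trans (sqr_intr_ge1 Hre re0) _; rewrite lerDl ge0.
Qed.

Lemma descent g n (v : 'cV[algC]_n) t i0 :
  primitiveR g v -> (forall i, inR g (v i 0)) -> v i0 0 != 0 ->
  (forall i, inR g (t * v i 0)) -> inR g t.
Proof.
move=> Hp Hv vi0 Htv.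
suff H : forall m : nat, forall d, inR g d -> inR g (t * d) -> d != 0 ->
    `|d| ^+ 2 < m%:R -> inR g t.
  apply: (H (Num.bound (`|v i0 0| ^+ 2)) (v i0 0)) => //.
  by apply: archi_boundP; rewrite exprn_ge0.
elim=> [|m IH] d Hd Htd d0 Hlt.
  by have := le_lt_trans (normR_ge1 Hd d0) Hlt; rewrite ltr10.
case Ht: (inR g t) => //.
have Hdiv : forall i, divR g d (v i 0).
  move=> i; have [q Hq Hb] := euclid (Hv i) Hd d0.
  have [r0|rn0] := eqVneq (v i 0 - q * d) 0.
    exists q; split => //; rewrite mulrC; apply/eqP; by rewrite -subr_eq0 r0.
  have Hr : inR g (v i 0 - q * d) by apply: inRB => //; apply: inRM.
  have Htr : inR g (t * (v i 0 - q * d)).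
    by rewrite mulrBr mulrCA; apply: inRB => //; apply: inRM.
  suff : inR g t by rewrite Ht.
  apply: (IH _ Hr Htr rn0).
  have H1 := normR_ge1 Hr rn0.
  have H2 : `|v i 0 - q * d| ^+ 2 + `|v i 0 - q * d| ^+ 2 <= `|d| ^+ 2.
    rewrite -mulr2n -[_ *+ 2]mulr_natr -ler_pdivlMr ?ltr0n //.
    by rewrite [_ / _]mulrC.
  rewrite -(ltrD2r 1) natr1; apply: le_lt_trans Hlt.
  by apply: le_trans H2; rewrite lerD2l.
have [_ [e [He de1]]] := Hp d Hd Hdiv.
by move: Ht; rewrite -[t]mulr1 -de1 mulrA (inRM Htd He).
Qed.

Lemma adj_row n (B : 'M[algC]_n) (j0 j : 'I_n) :
  \sum_i cofactor B i j0 * B i j = if j == j0 then \det B else 0.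
Proof.
transitivity ((\det B)%:M j0 j).
  by rewrite -(mul_adj_mx B) mxE; apply: eq_bigr => i _; rewrite mxE.
by rewrite mxE eq_sym; case: (j == j0).
Qed.

Lemma key n (B : 'M[algC]_n) (j0 : 'I_n) (a0 : 'cV_n) (lam : algC) :
  0 < lam ->
  (forall j, \sum_l (a0 l 0)^* * B l j = if j == j0 then lam else 0) ->
  \col_i (cofactor B i j0)^* = ((\det B)^* / lam) *: a0.
Proof.
move=> lam0 Ha.
have lamr : lam^* = lam by rewrite conj_Creal // gtr0_real.
have lnz : lam != 0 by rewrite gt_eqF.
set t := (\det B)^* / lam.
set v := \col_i (cofactor B i j0)^* - t *: a0.
have Hv : forall j, \sum_i (v i 0)^* * B i j = 0.
  move=> j.
  have -> : \sum_i (v i 0)^* * B i j =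
     \sum_i cofactor B i j0 * B i j - t^* * \sum_l (a0 l 0)^* * B l j.
    rewrite big_distrr -sumrB; apply: eq_bigr => i _.
    by rewrite !mxE rmorphB /= conjCK rmorphM /= mulrBl mulrA.
  rewrite adj_row Ha /t rmorphM /= conjCK fmorphV /= lamr.
  by case: (j == j0); rewrite ?mulr0 ?subrr // divfK // subrr.
apply/eqP; rewrite -subr_eq0; apply/eqP; rewrite -/v.
have [d0|dn0] := eqVneq (\det B) 0; last first.
  set w := \row_i (v i 0)^*.
  have wB : w *m B = 0.
    by apply/matrixP => i j; rewrite [LHS]mxE [RHS]mxE -[RHS](Hv j) (ord1 i); apply: eq_bigr => l _; rewrite mxE.
  have uB : B \in unitmx by rewrite unitmxE unitfE.
  have w0 : w = 0 by rewrite -(mulmxK uB w) wB mul0mx.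
  apply/matrixP => i j; rewrite (ord1 j) [RHS]mxE -[v i 0]conjCK.
  by have := congr1 (fun M : 'rV[algC]_n => M 0 i) w0; rewrite /= !mxE => ->; rewrite conjC0.
have t0 : t = 0 by rewrite /t d0 conjC0 mul0r.
have cz : forall i, cofactor B i j0 = 0.
  move=> i.
  have /det0P [x xn0 xB] : \det B^T == 0 by rewrite det_tr d0.
  have xB' : forall r, \sum_j x 0 j * B r j = 0.
    move=> r; have H := congr1 (fun M : 'rV[algC]_n => M 0 r) xB; rewrite /= [RHS]mxE in H; rewrite -[RHS]H mxE.
    by apply: eq_bigr => j _; rewrite mxE.
  have xj0 : x 0 j0 = 0.
    have : \sum_l (a0 l 0)^* * (\sum_j x 0 j * B l j) = 0.
      by rewrite big1 // => l _; rewrite xB' mulr0.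
    under eq_bigr do rewrite big_distrr.
    rewrite exchange_big /=.
    under eq_bigr do (under eq_bigr do rewrite mulrCA; rewrite -big_distrr /= Ha).
    rewrite (bigD1 j0) //= eqxx big1 ?addr0 => [/eqP|j /negPf ->]; last by rewrite mulr0.
    by rewrite mulf_eq0 (negPf lnz) orbF => /eqP.
  pose By := \matrix_(r, s) if s == j0 then (r == i)%:R else B r s.
  have cBy : cofactor By i j0 = cofactor B i j0.
    rewrite /cofactor; congr (_ * \det _); apply/matrixP => r s; rewrite !mxE.
    by rewrite eq_sym (negPf (neq_lift _ _)).
  have dBy : \det By = cofactor B i j0.
    rewrite (expand_det_col _ j0) (bigD1 i) //= big1 => [|r /negPf rn].
      by rewrite mxE !eqxx mul1r addr0 cBy.
    by rewrite mxE eqxx rn mul0r.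
  rewrite -dBy -det_tr; apply/eqP/det0P; exists x => //.
  apply/matrixP => z r; rewrite (ord1 z) [LHS]mxE [RHS]mxE -[RHS](xB' r).
  apply: eq_bigr => j _; rewrite !mxE.
  by case: eqP => [->|_]; rewrite ?xj0 ?mul0r.
apply/matrixP => i j; rewrite (ord1 j) !mxE cz conjC0 t0 mul0r.
by rewrite subr0.
Qed.

Theorem mainTheorem16 (gauss : bool) (n k : nat) (hk1 : (1 <= k)%N) (hkn : (k < n)%N)
  (n0 : (0 < n)%N)
  (a b : nat -> 'cV[algC]_n) (lam : algC) :
  icube gauss k a lam ->
  primitiveR gauss (a 0%N) ->
  basisLambda gauss k a b ->
  let B := Bmat k a b in
  let alpha := \col_(i < n) (cofactor B i (Ordinal n0))^* in
  inR gauss ((\det B)^* / lam) /\ alpha = ((\det B)^* / lam) *: a 0%N.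
Proof.
move=> [lam0 [Hav Hdot]] Hprim [Hbl _] B alpha.
set j0 := Ordinal n0.
have Ha : forall j : 'I_n, \sum_l (a 0%N l 0)^* * B l j = if j == j0 then lam else 0.
  move=> j; rewrite /B /Bmat.
  under eq_bigr do rewrite mxE.
  case: (ltnP j k) => jk.
    have := Hdot 0%N j hk1 jk; rewrite /dotC => E.
    by rewrite E -val_eqE /= eq_sym.
  have -> : (j == j0) = false.
    by rewrite -val_eqE /=; apply/negbTE; rewrite -lt0n (leq_trans hk1 jk).
  have [_ Hb0] := Hbl j (introT andP (conj jk (ltn_ord j))).
  exact: (Hb0 0%N hk1).
have Hkey := key lam0 Ha.
split; last exact: Hkey.
have HB : forall i j, inR gauss (B i j).
  move=> i j; rewrite /B /Bmat mxE; case: ltnP => jk; first exact: (Hav j jk).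
  by have [Hv _] := (Hbl j (introT andP (conj jk (ltn_ord j)))); exact: Hv.
have [i0 Hi0|H0] := pickP (fun i => a 0%N i 0 != 0); last first.
  exfalso; have := Hdot 0%N 0%N hk1 hk1; rewrite eqxx /dotC big1 => [E|i _].
    by move: lam0; rewrite -E ltxx.
  by have := H0 i => /= /negbFE/eqP ->; rewrite mulr0.
apply: (descent Hprim (Hav 0%N hk1) Hi0) => i.
have := congr1 (fun M : 'cV[algC]_n => M i 0) Hkey; rewrite /= !mxE => <-.
apply: inRJ; rewrite -inRpE; apply: rpredM.
  by apply: rpredX; rewrite rpredN rpred1.
change (inR gauss (\det (row' i (col' j0 B)))); apply: inR_det => r s; move: (HB (lift i r) (lift j0 s)); by rewrite !mxE.
Qed.
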